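(* Let $J\ge1$, $K,L\ge 0$, $p,q,n_1,\dots,n_J\ge1$, $n=\sum_j n_j$, $\mathbf X_\cdot\in\mathbb R^{p\times n}$, $\mathbf Y_\cdot=[\mathbf Y_1,\dots,\mathbf Y_J]\in\mathbb R^{q\times n}$ with $\mathbf Y_j\in\mathbb R^{q\times n_j}$, binary matrices $\mathbf C_Y\in\{0,1\}^{J\times K}$, $\mathbf C_S\in\{0,1\}^{J\times L}$, and penalties $\lambda_B^{(k)}>0$, $\lambda_S^{(l)}>0$. Define $\mathbf Y_\cdot^{(k)}=[\mathbf Y_1^{(k)},\dots,\mathbf Y_J^{(k)}]$ with $\mathbf Y_j^{(k)}=\mathbf Y_j$ if $\mathbf C_Y[j,k]=1$ and $\mathbf 0_{q\times n_j}$ otherwise; let $\mathcal S_l$ be the set of $p\times n$ matrices whose $j$-th column block (of width $n_j$) is zero whenever $\mathbf C_S[j,l]=0$. Let $$f(\{\mathbf B_k\},\{\mathbf S^{(l)}\})=\tfrac12\Big\|\mathbf X_\cdot-\sum_{k}\mathbf B_k\mathbf Y_\cdot^{(k)}-\sum_{l}\mathbf S^{(l)}\Big\|_F^2+\sum_k\lambda_B^{(k)}\|\mathbf B_k\|_*+\sum_l\lambda_S^{(l)}\|\mathbf S^{(l)}\|_*$$ over $\mathbf B_k\in\mathbb R^{p\times q}$, $\mathbf S^{(l)}\in\mathcal S_l$. The following conditions are needed to allow non-zero estimation of the modules, in the sense that if a listed condition fails, then for every minimizer of $f$ there is another minimizer of $f$ (with objective value no larger) in which the indicated module is zero: 1.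 (module $\mathbf B_k$) Let $\mathcal I_k\subset\{1,\dots,K\}\setminus\{k\}$ be any set with $\sum_{i\in\mathcal I_k}\mathbf C_Y[\cdot,i]=c_y\,\mathbf C_Y[\cdot,k]$ for some positive integer $c_y$. Then $\lambda_B^{(k)}<\frac1{c_y}\sum_{i\in\mathcal I_k}\lambda_B^{(i)}$. 2. (module $\mathbf B_k$) Let $\mathcal I_k\subset\{1,\dots,L\}$ be any set with $\sum_{i\in\mathcal I_k}\mathbf C_S[\cdot,i]=c_{sy}\,\mathbf C_Y[\cdot,k]$ for some positive integer $c_{sy}$. Then $\lambda_B^{(k)}<\frac1{c_{sy}}\sum_{i\in\mathcal I_k}\lambda_S^{(i)}\|\mathbf Y_\cdot^{(k)}\|_*$. 3. (module $\mathbf S^{(l')}$) For $l\ne l'$ with $\mathbf C_S[j,l]\ge\mathbf C_S[j,l']$ for all $j$: $\lambda_S^{(l')}<\lambda_S^{(l)}$. 4. (module $\mathbf S^{(l)}$) Let $\mathcal I_l\subset\{1,\dots,L\}\setminus\{l\}$ be any set with $\sum_{i\in\mathcal I_l}\mathbf C_S[\cdot,i]=c_s\,\mathbf C_S[\cdot,l]$ for some positive integer $c_s$. Then $\lambda_S^{(l)}<\frac1{c_s}\sum_{i\in\mathcal I_l}\lambda_S^{(i)}$.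
   Context: $\|\cdot\|_*$ is the nuclear norm and $\|\cdot\|_F$ the Frobenius norm; $\mathbf C[\cdot,i]$ denotes the $i$-th column of $\mathbf C$. The indicator matrices specify on which cohorts (column blocks) each module is present. *)

(* Defs.v *)
From HB Require Import structures.
From mathcomp Require Import all_boot all_order all_algebra.
From mathcomp Require Import polyrcf reals.
Set Implicit Arguments.
Unset Strict Implicit.
Unset Printing Implicit Defensive.
Import Order.TTheory GRing.Theory Num.Theory.
Local Open Scope ring_scope.

Section Defs.
Variable R : realType.

Definition frob2 (m n : nat) (A : 'M[R]_(m, n)) : R :=
  \sum_(i < m) \sum_(j < n) (A i j) ^+ 2.

(* Nuclear norm = sum of the singular values of A, i.e. of the square roots
   of the eigenvalues (with algebraic multiplicity) of A^T A; these
   eigenvalues are the roots of the characteristic polynomial of A^T A,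
   which are all real and nonnegative. *)
Definition nucnorm (m n : nat) (A : 'M[R]_(m, n)) : R :=
  let P := char_poly (A^T *m A) in
  \sum_(x <- rootsR P) (mup x P)%:R * Num.sqrt x.

Variables (J : nat) (nj : 'I_J -> nat).
Local Notation n := (\sum_(j < J) nj j)%N.

Definition maskblocks (m : nat) (c : 'I_J -> bool) (Y : 'M[R]_(m, n))
  : 'M[R]_(m, n) :=
  \mxrow_(j < J) (if c j then submxrow Y j else 0).

Definition in_blockset (m : nat) (c : 'I_J -> bool) (S : 'M[R]_(m, n)) : Prop :=
  forall j : 'I_J, c j = false -> submxrow S j = 0.

Variables (K L p q : nat).
Variables (X : 'M[R]_(p, n)) (Y : 'M[R]_(q, n)).
Variables (CY : 'I_J -> 'I_K -> bool) (CS : 'I_J -> 'I_L -> bool).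
Variables (lamB : 'I_K -> R) (lamS : 'I_L -> R).

Definition Yk (k : 'I_K) : 'M[R]_(q, n) := maskblocks (fun j => CY j k) Y.

Definition feasible (S : 'I_L -> 'M[R]_(p, n)) : Prop :=
  forall l : 'I_L, in_blockset (fun j => CS j l) (S l).

Definition fobj (B : 'I_K -> 'M[R]_(p, q)) (S : 'I_L -> 'M[R]_(p, n)) : R :=
  2^-1 * frob2 (X - \sum_(k < K) (B k *m Yk k) - \sum_(l < L) S l)
  + \sum_(k < K) lamB k * nucnorm (B k)
  + \sum_(l < L) lamS l * nucnorm (S l).

Definition is_minimizer (B : 'I_K -> 'M[R]_(p, q)) (S : 'I_L -> 'M[R]_(p, n))
  : Prop :=
  feasible S /\
  forall (B' : 'I_K -> 'M[R]_(p, q)) (S' : 'I_L -> 'M[R]_(p, n)),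
    feasible S' -> fobj B S <= fobj B' S'.

Definition module_removable
  (zero : ('I_K -> 'M[R]_(p, q)) -> ('I_L -> 'M[R]_(p, n)) -> Prop) : Prop :=
  forall B S, is_minimizer B S ->
    exists B' S', [/\ is_minimizer B' S', fobj B' S' <= fobj B S & zero B' S'].

End Defs.

(* Main.v *)
Require Import Defs.
From HB Require Import structures.
From mathcomp Require Import all_boot all_order all_algebra.
From mathcomp Require Import polyrcf reals complex spectral sesquilinear ring lra.
Import Order.TTheory GRing.Theory Num.Theory.
Local Open Scope ring_scope.
Set Implicit Arguments.
Unset Strict Implicit.
Unset Printing Implicit Defensive.
Lemma charpoly_similar (F : fieldType) n (P D : 'M[F]_n) : P \in unitmx ->
  char_poly (invmx P *m D *m P) = char_poly D.
Proof.
move=> Pu; rewrite /char_poly /char_poly_mx.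
set Q := map_mx polyC (invmx P); set Pp := map_mx polyC P.
have QP : Q *m Pp = 1%:M by rewrite -map_mxM mulVmx // map_mx1.
have PQ : Pp *m Q = 1%:M by rewrite -map_mxM mulmxV // map_mx1.
have E : ('X%:M : 'M_n) - map_mx polyC (invmx P *m D *m P)
   = Q *m ('X%:M - map_mx polyC D) *m Pp.
  rewrite mulmxBr mulmxBl !map_mxM -/Q -/Pp; congr (_ - _).
  by rewrite mul_mx_scalar -scalemxAl QP scalemx1.
rewrite E !det_mulmx mulrC mulrA -det_mulmx PQ det1 mul1r //.
Qed.
Section Nuc.
Variable R : realType.
Lemma sum_count (r s : seq R) (f : R -> R) : uniq r -> {subset s <= r} ->
  \sum_(x <- r) (count_mem x s)%:R * f x = \sum_(y <- s) f y.
Proof.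
move=> ur; elim: s => [|y s IH] sr.
  by rewrite big_nil big1 // => x _; rewrite mul0r.
rewrite big_cons -IH; last by move=> z zs; apply: sr; rewrite inE zs orbT.
rewrite (bigD1_seq y) ?sr ?mem_head //= eqxx.
rewrite [X in _ = _ + X](bigD1_seq y) ?sr ?mem_head //= addrA.
rewrite natrD mulrDl mul1r; congr (_ + _).
apply: eq_bigr => x xy; rewrite eq_sym (negbTE xy) add0n //.
Qed.

Lemma nuc_prod (s : seq R) (f : R -> R) (P := \prod_(x <- s) ('X - x%:P)) :
  \sum_(x <- rootsR P) (mup x P)%:R * f x = \sum_(x <- s) f x.
Proof.
have P0 : P != 0 by rewrite monic_neq0 // monic_prod_XsubC.
have hr := roots_on_rootsR P0.
rewrite -(@sum_count (rootsR P)).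
- by apply: eq_bigr => x _; rewrite mu_prod_XsubC.
- exact: uniq_roots.
move=> x xs; rewrite -hr root_prod_XsubC xs andbT. by rewrite itv_boundlr.
Qed.
End Nuc.
Section Spec.
Variable R : realType.
Local Notation C := (R[i]).
Local Notation toC := (real_complex R).
Local Notation "M ^*t" := ((M ^t*)%sesqui) (at level 2).

Lemma toC_real (x : R) : toC x \is Num.real.
Proof. by apply/complex_realP; exists x. Qed.

Lemma tC_mul a b c (M : 'M[C]_(a, b)) (N : 'M[C]_(b, c)) :
  (M *m N)^*t = N^*t *m M^*t.
Proof. by rewrite trmx_mul map_mxM. Qed.

Lemma tC_real a b (M : 'M[R]_(a, b)) : (map_mx toC M)^*t = map_mx toC M^T.
Proof. by apply/matrixP => i j; rewrite !mxE conj_Creal // toC_real. Qed.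

Lemma spec_data m n (A : 'M[R]_(m,n)) : exists (mu : 'I_n -> R) (Z : 'M[C]_n),
  [/\ forall k, 0 <= mu k, Z *m Z^*t = 1%:M, Z^*t *m Z = 1%:M,
   (map_mx toC A *m Z)^*t *m (map_mx toC A *m Z) = diag_mx (\row_k toC (mu k)) &
   char_poly (A^T *m A) = \prod_k ('X - (mu k)%:P)].
Proof.
set Ac := map_mx toC A; set Sc := Ac^*t *m Ac.
have Sc_real : Sc = map_mx toC (A^T *m A) by rewrite /Sc tC_real map_mxM -map_trmx.
have Sc_herm : Sc \is hermsymmx.
  apply: realsym_hermsym.
    apply/is_hermitianmxP; rewrite expr0 scale1r map_mx_id //.
    by rewrite Sc_real map_trmx trmx_mul trmxK.
  by apply/mxOverP => i j; rewrite Sc_real mxE toC_real.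
have /orthomx_spectralP hP := hermitian_normalmx Sc_herm.
have spR := hermitian_spectral_diag_real Sc_herm.
set P := spectralmx Sc in hP; set sp := spectral_diag Sc in hP spR.
have Pu : P \is unitarymx := spectral_unitarymx Sc.
have Pinv : invmx P = P^*t := invmx_unitary Pu.
have PPt : P *m P^*t = 1%:M by apply/unitarymxP.
have PtP : P^*t *m P = 1%:M by rewrite -Pinv mulVmx // unitarymx_unit.
pose mu k := complex.Re (sp 0 k).
have spE : sp = \row_k toC (mu k).
  by apply/rowP => k; rewrite mxE RRe_real //; move/mxOverP: spR; apply.
have GG : (Ac *m P^*t)^*t *m (Ac *m P^*t) = diag_mx sp.
  rewrite tC_mul trmxCK -mulmxA [Ac^*t *m _]mulmxA -/Sc hP Pinv.
  by rewrite !mulmxA PPt mul1mx -mulmxA PPt mulmx1.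
exists mu, P^*t; split.
- move=> k; rewrite -ler0c.
  have := GG; move/matrixP/(_ k k); rewrite mxE [in RHS]mxE eqxx mulr1n.
  rewrite /mu RRe_real; last by move/mxOverP: spR; apply.
  move=> <-; apply: sumr_ge0 => i _; rewrite !mxE mulrC; exact: mul_conjC_ge0.
- by rewrite trmxCK.
- by rewrite trmxCK.
- by rewrite GG spE.
apply: (map_poly_inj toC).
rewrite map_char_poly -Sc_real hP charpoly_similar ?unitarymx_unit //.
rewrite char_poly_trig ?diag_mx_is_trig // rmorph_prod; apply: eq_bigr => k _.
by rewrite /= map_polyXsubC spE !mxE eqxx mulr1n.
Qed.
Lemma tC_mul' a b c (M : 'M[C]_(a, b)) (N : 'M[C]_(b, c)) :
  (M *m N)^*t = N^*t *m M^*t.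
Proof. by rewrite trmx_mul map_mxM. Qed.

Lemma tC_B a b (M N : 'M[C]_(a, b)) : (M - N)^*t = M^*t - N^*t.
Proof. by rewrite linearB /= map_mxB. Qed.

Lemma tC_1 a : (1%:M : 'M[C]_a)^*t = 1%:M.
Proof. by rewrite trmx1 map_mx1. Qed.


Definition cf a b (M : 'M[C]_(a, b)) := \tr (M^*t *m M).

Lemma cfE a b (M : 'M[C]_(a, b)) : cf M = \sum_k \sum_i M i k * (M i k)^*.
Proof.
rewrite /cf /mxtrace; apply: eq_bigr => k _; rewrite mxE.
by apply: eq_bigr => i _; rewrite !mxE mulrC.
Qed.

Lemma cf_ge0 a b (M : 'M[C]_(a, b)) : 0 <= cf M.
Proof. by rewrite cfE; do 2![apply: sumr_ge0 => ? _]; exact: mul_conjC_ge0. Qed.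

Lemma cf_real a b (U : 'M[R]_(a, b)) : cf (map_mx toC U) = toC (frob2 U).
Proof.
rewrite cfE /frob2 exchange_big rmorph_sum; apply: eq_bigr => k _.
rewrite rmorph_sum; apply: eq_bigr => i _.
by rewrite mxE conj_Creal ?toC_real // expr2 rmorphM.
Qed.

Lemma cf_unitary a b (M : 'M[C]_(a, b)) (Z : 'M[C]_b) :
  Z *m Z^*t = 1%:M -> cf (M *m Z) = cf M.
Proof.
move=> ZZ; rewrite /cf tC_mul' -mulmxA mxtrace_mulC -!mulmxA ZZ mulmx1.
by rewrite mxtrace_mulC.
Qed.

Lemma cf_bessel m n r (W : 'M[C]_(m, n)) (U : 'M[C]_(m, r)) :
  W *m (W^*t *m W) = W -> cf (W^*t *m U) <= cf U.
Proof.
move=> WW.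
have WW' : W^*t *m W *m W^*t = W^*t.
  by have := congr1 (fun M => M^*t) WW; rewrite !tC_mul' trmxCK.
set Q := W *m W^*t.
have Qt : Q^*t = Q by rewrite /Q tC_mul' trmxCK.
have QQ : Q *m Q = Q by rewrite /Q mulmxA -[W *m _ *m W]mulmxA WW.
have E : (U - Q *m U)^*t *m (U - Q *m U) = U^*t *m U - (W^*t *m U)^*t *m (W^*t *m U).
  rewrite tC_B tC_mul' Qt mulmxBl !mulmxBr.
  have e1 : U^*t *m Q *m (Q *m U) = U^*t *m (Q *m U).
    by rewrite -mulmxA [Q *m (Q *m U)]mulmxA QQ.
  have e2 : U^*t *m Q *m U = U^*t *m (Q *m U) by rewrite [RHS]mulmxA.
  have e3 : (W^*t *m U)^*t *m (W^*t *m U) = U^*t *m (Q *m U).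
    by rewrite tC_mul' trmxCK /Q !mulmxA.
  by rewrite e1 e2 e3 subrr subr0.
have := cf_ge0 (U - Q *m U); rewrite /cf E linearB /= subr_ge0 //.
Qed.

Lemma ent_ineq (x y : C) : x * y + (x * y)^* <= x * x^* + y * y^*.
Proof.
have h := mul_conjC_ge0 (x^* - y); rewrite rmorphB /= conjCK in h.
rewrite rmorphM -subr_ge0.
have -> : x * x^* + y * y^* - (x * y + x^* * y^*) = (x^* - y) * (x - y^*) by ring.
exact: h.
Qed.

Lemma tr_ineq n r (a : 'M[C]_(n, r)) (b : 'M[C]_(r, n)) :
  \tr (a *m b) + (\tr (a *m b))^* <= cf a + cf b.
Proof.
rewrite !cfE [X in _ <= X + _]exchange_big /mxtrace rmorph_sum -!big_split.
apply: ler_sum => k _; rewrite mxE rmorph_sum -!big_split.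
by apply: ler_sum => t _; exact: ent_ineq.
Qed.


Definition dg n (x : 'I_n -> R) : 'M[C]_n := diag_mx (\row_k toC (x k)).

Lemma dg_t n (x : 'I_n -> R) : (dg x)^*t = dg x.
Proof.
rewrite /dg tr_diag_mx; apply/matrixP => i j; rewrite !mxE.
by case: eqP => _; rewrite ?mulr1n ?mulr0n ?conj_Creal ?toC_real ?rmorph0.
Qed.

Lemma dgM n (x y : 'I_n -> R) : dg x *m dg y = dg (fun k => x k * y k).
Proof.
rewrite /dg mulmx_diag; congr diag_mx; apply/rowP => k; rewrite !mxE.
by rewrite rmorphM.
Qed.

Lemma tr_dg n (x : 'I_n -> R) : \tr (dg x) = toC (\sum_k x k).
Proof. by rewrite mxtrace_diag rmorph_sum; apply: eq_bigr => k _; rewrite mxE. Qed.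

Lemma dg_eq n (x y : 'I_n -> R) : (forall k, x k = y k) -> dg x = dg y.
Proof. by move=> h; rewrite /dg; congr diag_mx; apply/rowP => k; rewrite !mxE h. Qed.

Lemma frob2_tr a b (V : 'M[R]_(a, b)) : frob2 V^T = frob2 V.
Proof. by rewrite /frob2 exchange_big; do 2!apply: eq_bigr => ? _; rewrite mxE. Qed.

Lemma nuc_mu m n (A : 'M[R]_(m, n)) (mu : 'I_n -> R) :
  char_poly (A^T *m A) = \prod_k ('X - (mu k)%:P) ->
  nucnorm A = \sum_k Num.sqrt (mu k).
Proof.
move=> h; rewrite /nucnorm /= h.
have -> : \prod_k ('X - (mu k)%:P) = \prod_(x <- map mu (index_enum 'I_n)) ('X - x%:P).
  by rewrite big_map.
by rewrite nuc_prod big_map.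
Qed.

Lemma inv3 (s : R) : s^-1 * (s^-1 * s ^+ 2 * s^-1) = s^-1.
Proof. by have [->|s0] := eqVneq s 0; rewrite ?invr0 ?mul0r //; field. Qed.

Lemma inv1 (s : R) : s^-1 * s ^+ 2 = s.
Proof. by have [->|s0] := eqVneq s 0; rewrite ?invr0 ?mul0r //; field. Qed.

Lemma nuc_le m n r (U : 'M[R]_(m, r)) (V : 'M[R]_(n, r)) :
  nucnorm (U *m V^T) <= (frob2 U + frob2 V) / 2.
Proof.
have [mu [Z [mu0 ZZt ZtZ GG cp]]] := spec_data (U *m V^T).
rewrite (nuc_mu cp).
set Ac := map_mx toC (U *m V^T) in GG *.
have AcE : Ac = map_mx toC U *m (map_mx toC V)^T by rewrite /Ac map_mxM map_trmx.
set G := Ac *m Z in GG.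
have GE : G = Ac *m Z by [].
clearbody G.
pose s k := Num.sqrt (mu k).
have mus k : mu k = s k ^+ 2 by rewrite sqr_sqrtr.
have GG' : G^*t *m G = dg (fun k => s k ^+ 2).
  by rewrite GG -/(dg mu); apply: dg_eq.
pose D := dg (fun k => (s k)^-1).
pose W := G *m D.
have WW : W *m (W^*t *m W) = W.
  rewrite /W tC_mul' dg_t.
  have -> : D *m G^*t *m (G *m D) = D *m (G^*t *m G) *m D by rewrite !mulmxA.
  rewrite GG' !dgM -mulmxA dgM.
  by congr (G *m _); apply: dg_eq => k; rewrite inv3.
pose a := W^*t *m map_mx toC U; pose b := (map_mx toC V)^T *m Z.
have trab : \tr (a *m b) = toC (\sum_k s k).
  rewrite /a /b -mulmxA [map_mx toC U *m _]mulmxA -AcE -GE.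
  rewrite /W tC_mul' dg_t -mulmxA GG' dgM tr_dg; congr toC.
  by apply: eq_bigr => k _; rewrite inv1.
have h := tr_ineq a b.
rewrite trab conj_Creal ?toC_real // in h.
have ha : cf a <= toC (frob2 U) by rewrite -cf_real; exact: cf_bessel.
have hb : cf b = toC (frob2 V).
  by rewrite /b cf_unitary // map_trmx cf_real frob2_tr.
have := le_trans h (lerD ha (lexx (cf b))); rewrite hb.
rewrite -!rmorphD /= lecR => h2.
have -> : \sum_k Num.sqrt (mu k) = \sum_k s k by [].
lra.
Qed.

Lemma ReMconj (u v : C) :
  complex.Re (u * v^*) = complex.Re u * complex.Re v + complex.Im u * complex.Im v.
Proof. by case: u => a b; case: v => c d /=; ring. Qed.

Lemma ReS n (F : 'I_n -> C) : complex.Re (\sum_k F k) = \sum_k complex.Re (F k).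
Proof. by rewrite raddf_sum. Qed.

Lemma frob2_row_mx a b c (X : 'M[R]_(a, b)) (Y : 'M[R]_(a, c)) :
  frob2 (row_mx X Y) = frob2 X + frob2 Y.
Proof.
rewrite /frob2 -big_split; apply: eq_bigr => i _.
by rewrite big_split_ord /=; congr (_ + _); apply: eq_bigr => j _;
  rewrite ?row_mxEl ?row_mxEr.
Qed.

Lemma cf_ReIm a b (M : 'M[C]_(a, b)) :
  cf M = toC (frob2 (map_mx (@complex.Re R) M) + frob2 (map_mx (@complex.Im R) M)).
Proof.
rewrite cfE exchange_big /frob2 -big_split rmorph_sum; apply: eq_bigr => i _.
rewrite -big_split rmorph_sum; apply: eq_bigr => j _; rewrite !mxE.
by have := add_Re2_Im2 (M i j); rewrite normCK => <-.
Qed.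

Lemma qid (s : R) : 0 <= s ->
  (Num.sqrt s)^-1 * s ^+ 2 * (Num.sqrt s)^-1 = s.
Proof.
move=> s0; rewrite -[in s ^+ 2](sqr_sqrtr s0) -[in RHS](sqr_sqrtr s0).
by have [->|q0] := eqVneq (Num.sqrt s) 0; rewrite ?invr0 ?mul0r ?expr0n //=; field.
Qed.

Lemma nuc_dec m n (A : 'M[R]_(m, n)) : exists r (U : 'M[R]_(m, r)) (V : 'M[R]_(n, r)),
  [/\ A = U *m V^T, frob2 U = nucnorm A & frob2 V = nucnorm A].
Proof.
have [mu [Z [mu0 ZZt ZtZ GG cp]]] := spec_data A.
rewrite (nuc_mu cp).
set Ac := map_mx toC A in GG.
set G := Ac *m Z in GG.
have GE : G = Ac *m Z by [].
clearbody G.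
pose s k := Num.sqrt (mu k).
pose q k := Num.sqrt (s k).
have s0 k : 0 <= s k by apply: sqrtr_ge0.
have mus k : mu k = s k ^+ 2 by rewrite sqr_sqrtr.
have GG' : G^*t *m G = dg (fun k => s k ^+ 2).
  by rewrite GG -/(dg mu); apply: dg_eq.
have Gcol i k : q k = 0 -> G i k = 0.
  move=> qk; have sk : s k = 0 by rewrite -[s k]sqr_sqrtr // -/(q k) qk expr0n.
  have := GG; move/matrixP/(_ k k); rewrite !mxE eqxx mulr1n -/(s k).
  rewrite mus sk expr0n /= => h.
  have /eqP : (G i k)^* * G i k = 0.
    have h' : \sum_(j < m) (G j k)^* * G j k = 0.
      by rewrite -[RHS]/(toC 0) -h; apply: eq_bigr => j _; rewrite !mxE.
    by apply: (psumr_eq0P _ h') => // j _; rewrite mulrC; exact: mul_conjC_ge0.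
  by rewrite mulf_eq0 conjC_eq0 orbb => /eqP.
pose U0 := G *m dg (fun k => (q k)^-1).
pose V0 := Z *m dg q.
have key : U0 *m V0^*t = Ac.
  rewrite /U0 /V0 tC_mul' dg_t mulmxA -[G *m _ *m _]mulmxA dgM.
  have -> : G *m dg (fun k => (q k)^-1 * q k) = G.
    apply/matrixP => i k; rewrite /dg mul_mx_diag !mxE.
    have [qk|qk] := eqVneq (q k) 0; first by rewrite Gcol // mul0r.
    by rewrite mulVf // mulr1.
  by rewrite GE -mulmxA ZZt mulmx1.
exists (n + n)%N, (row_mx (map_mx (@complex.Re R) U0) (map_mx (@complex.Im R) U0)),
  (row_mx (map_mx (@complex.Re R) V0) (map_mx (@complex.Im R) V0)); split.
- apply/matrixP => i j; rewrite tr_row_mx mul_row_col !mxE.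
  have := key; move/matrixP/(_ i j); rewrite !mxE => /(congr1 (@complex.Re R)).
  rewrite /= ReS => <-; rewrite -big_split; apply: eq_bigr => k _.
  by rewrite !mxE ReMconj.
- apply: complexI; rewrite frob2_row_mx -cf_ReIm /cf /U0 tC_mul' dg_t.
  have -> : dg (fun k => (q k)^-1) *m G^*t *m (G *m dg (fun k => (q k)^-1))
    = dg (fun k => (q k)^-1) *m (G^*t *m G) *m dg (fun k => (q k)^-1).
    by rewrite !mulmxA.
  rewrite GG' !dgM tr_dg; congr toC; apply: eq_bigr => k _.
  by rewrite /q qid.
apply: complexI; rewrite frob2_row_mx -cf_ReIm /cf /V0 tC_mul' dg_t.
have -> : dg q *m Z^*t *m (Z *m dg q) = dg q *m (Z^*t *m Z) *m dg q.
  by rewrite !mulmxA.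
rewrite ZtZ mulmx1 dgM tr_dg; congr toC; apply: eq_bigr => k _.
by rewrite /q -expr2 sqr_sqrtr.
Qed.

End Spec.

Section Norms.
Variable R : realType.

Lemma frob2_ge0 a b (M : 'M[R]_(a, b)) : 0 <= frob2 M.
Proof. by apply: sumr_ge0 => i _; apply: sumr_ge0 => j _; exact: sqr_ge0. Qed.

Lemma frob2Z a b (t : R) (M : 'M[R]_(a, b)) : frob2 (t *: M) = t ^+ 2 * frob2 M.
Proof.
rewrite /frob2 mulr_sumr; apply: eq_bigr => i _; rewrite mulr_sumr.
by apply: eq_bigr => j _; rewrite mxE exprMn.
Qed.

Lemma frob2_0 a b : frob2 (0 : 'M[R]_(a, b)) = 0.
Proof. by rewrite -(scale0r (0 : 'M[R]_(a, b))) frob2Z expr0n mul0r. Qed.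

Lemma frob2_eq0 a b (M : 'M[R]_(a, b)) : frob2 M = 0 -> M = 0.
Proof.
move=> h; apply/matrixP => i j; rewrite mxE.
have h1 : \sum_j M i j ^+ 2 = 0.
  by apply: (psumr_eq0P _ h) => // i' _; apply: sumr_ge0 => j' _; exact: sqr_ge0.
have /eqP : M i j ^+ 2 = 0 by apply: (psumr_eq0P _ h1) => // j' _; exact: sqr_ge0.
by rewrite sqrf_eq0 => /eqP.
Qed.

Lemma CS n (a b : 'I_n -> R) :
  (\sum_k a k * b k) ^+ 2 <= (\sum_k a k ^+ 2) * (\sum_k b k ^+ 2).
Proof.
set A := \sum_k a k ^+ 2; set B := \sum_k b k ^+ 2; set S := \sum_k a k * b k.
have A0 : 0 <= A by apply: sumr_ge0 => k _; exact: sqr_ge0.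
have quad t : 0 <= t ^+ 2 * A - 2 * t * S + B.
  have -> : t ^+ 2 * A - 2 * t * S + B = \sum_k (t * a k - b k) ^+ 2.
    rewrite /A /S /B !mulr_sumr -sumrN -!big_split /=.
    by apply: eq_bigr => k _; ring.
  by apply: sumr_ge0 => k _; exact: sqr_ge0.
have [Az|Ap] := eqVneq A 0.
  have ak k : a k = 0.
    have /eqP : a k ^+ 2 = 0 by apply: (psumr_eq0P _ Az) => // j' _; exact: sqr_ge0.
    by rewrite sqrf_eq0 => /eqP.
  rewrite Az /S big1 ?expr0n ?mul0r //= => k _; by rewrite ak mul0r.
have Ag : 0 < A by rewrite lt_def Ap A0.
have := quad (S / A).
have -> : (S / A) ^+ 2 * A - 2 * (S / A) * S + B = B - S ^+ 2 / A by field.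
by rewrite subr_ge0 ler_pdivrMr // mulrC.
Qed.

Lemma frob2M a b c (X : 'M[R]_(a, b)) (Y : 'M[R]_(b, c)) :
  frob2 (X *m Y) <= frob2 X * frob2 Y.
Proof.
rewrite /frob2 [X in _ <= _ * X]exchange_big mulr_suml; apply: ler_sum => i _.
rewrite mulr_sumr; apply: ler_sum => j _; rewrite mxE.
have := CS (fun k => X i k) (fun k => Y k j); rewrite /=.
by [].
Qed.

Lemma nuc_ge0 m n (A : 'M[R]_(m, n)) : 0 <= nucnorm A.
Proof. by have [r [U [V [_ <- _]]]] := nuc_dec A; exact: frob2_ge0. Qed.

Lemma nuc0 m n : nucnorm (0 : 'M[R]_(m, n)) = 0.
Proof.
apply/le_anti; rewrite nuc_ge0 andbT.
have := @nuc_le R m n 0 0 0; rewrite mul0mx !frob2_0; lra.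
Qed.

Lemma nucD m n (A B : 'M[R]_(m, n)) : nucnorm (A + B) <= nucnorm A + nucnorm B.
Proof.
have [r1 [U1 [V1 [-> hU1 hV1]]]] := nuc_dec A.
have [r2 [U2 [V2 [-> hU2 hV2]]]] := nuc_dec B.
have := nuc_le (row_mx U1 U2) (row_mx V1 V2).
rewrite tr_row_mx mul_row_col !frob2_row_mx hU1 hV1 hU2 hV2; lra.
Qed.

Lemma nucZ m n (t : R) (A : 'M[R]_(m, n)) : 0 <= t -> nucnorm (t *: A) <= t * nucnorm A.
Proof.
move=> t0; have [r [U [V [-> hU hV]]]] := nuc_dec A.
have := nuc_le (Num.sqrt t *: U) (Num.sqrt t *: V).
rewrite !frob2Z sqr_sqrtr // linearZ /= -scalemxAl -scalemxAr scalerA.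
rewrite -expr2 sqr_sqrtr // hU hV; lra.
Qed.

Lemma nucM m n k (B : 'M[R]_(m, n)) (Z : 'M[R]_(n, k)) :
  nucnorm (B *m Z) <= nucnorm B * nucnorm Z.
Proof.
have [r [U [V [BE hU hV]]]] := nuc_dec B.
have [r' [P [Q [ZE hP hQ]]]] := nuc_dec Z.
set t := nucnorm Z in hP hQ *.
have [t0|tp] := eqVneq t 0.
  have -> : Z = 0 by rewrite ZE (frob2_eq0 (etrans hP t0)) mul0mx.
  by rewrite mulmx0 nuc0 t0 mulr0.
have tg : 0 < t by rewrite lt_def tp nuc_ge0.
pose W := Q *m (P^T *m V).
have BZ : B *m Z = (Num.sqrt t *: U) *m ((Num.sqrt t)^-1 *: W)^T.
  rewrite BE ZE /W linearZ /= -scalemxAl -scalemxAr scalerA mulrV; last first.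
    by rewrite unitfE sqrtr_eq0 -ltNge.
  by rewrite scale1r !trmx_mul !trmxK !mulmxA.
have hW : frob2 W <= t * (t * nucnorm B).
  apply: le_trans (frob2M _ _) _; rewrite hQ ler_pM2l //.
  by apply: le_trans (frob2M _ _) _; rewrite frob2_tr hP hV.
have := nuc_le (Num.sqrt t *: U) ((Num.sqrt t)^-1 *: W).
rewrite -BZ !frob2Z exprVn (sqr_sqrtr (ltW tg)) hU => h.
apply: le_trans h _.
have : t^-1 * frob2 W <= t * nucnorm B.
  by rewrite ler_pdivrMl // mulrA -expr2; apply: le_trans hW _; rewrite expr2 mulrA.
have := nuc_ge0 B; lra.
Qed.

End Norms.

Section Mask.
Variables (R : realType) (J : nat) (nj : 'I_J -> nat).
Local Notation n := (\sum_(j < J) nj j)%N.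

Lemma mask_sub m c (Y : 'M[R]_(m, n)) j :
  submxrow (maskblocks c Y) j = if c j then submxrow Y j else 0.
Proof. by rewrite /maskblocks mxrowK. Qed.

Lemma submxrowZ m (a : R) (Y : 'M[R]_(m, n)) j :
  submxrow (a *: Y) j = a *: submxrow Y j.
Proof. by apply/matrixP => i i'; rewrite !mxE. Qed.

Lemma maskM m r c (U : 'M[R]_(m, r)) (W : 'M[R]_(r, n)) :
  maskblocks c (U *m W) = U *m maskblocks c W.
Proof.
apply/mxrowP => j; rewrite -mul_submxrow !mask_sub.
by case: (c j); rewrite ?mul_submxrow ?mulmx0.
Qed.

Lemma maskE m c (W : 'M[R]_(m, n)) i k :
  maskblocks c W i k = if c (tagnat.sig1 k) then W i k else 0.
Proof.
by rewrite /maskblocks mxE; case: (c _); rewrite !mxE ?tagnat.sig2K.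
Qed.

Lemma mask_frob2 m c (W : 'M[R]_(m, n)) : frob2 (maskblocks c W) <= frob2 W.
Proof.
apply: ler_sum => i _; apply: ler_sum => k _; rewrite maskE.
by case: ifP => _ //; rewrite expr0n /= sqr_ge0.
Qed.

Lemma nuc_mask m c (M : 'M[R]_(m, n)) : nucnorm (maskblocks c M) <= nucnorm M.
Proof.
have [r [U [V [ME hU hV]]]] := nuc_dec M.
have := nuc_le U (maskblocks c V^T)^T.
rewrite trmxK -maskM -ME frob2_tr => h; apply: le_trans h _.
have := mask_frob2 c V^T; rewrite frob2_tr; lra.
Qed.

Lemma mask_id m c (M : 'M[R]_(m, n)) :
  (forall j, c j = false -> submxrow M j = 0) -> maskblocks c M = M.
Proof.
move=> h; apply/mxrowP => j; rewrite mask_sub.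
by case E: (c j) => //; rewrite h.
Qed.

Lemma mask_sum (T : finType) m (I : {set T}) (cs : T -> 'I_J -> bool)
    (ck : 'I_J -> bool) (c : nat) (M : 'M[R]_(m, n)) :
  (forall j, \sum_(i in I) (cs i j : nat) = c * ck j)%N ->
  \sum_(i in I) maskblocks (cs i) M = c%:R *: maskblocks ck M.
Proof.
move=> hs; apply/mxrowP => j; rewrite submxrow_sum submxrowZ mask_sub.
rewrite (eq_bigr (fun i => (cs i j : nat)%:R *: submxrow M j)); last first.
  by move=> i _; rewrite mask_sub; case: (cs i j); rewrite ?scale1r ?scale0r.
rewrite -scaler_suml -natr_sum hs natrM.
by case: (ck j); rewrite ?mulr1 ?mulr0 ?scale0r ?scaler0.
Qed.

Lemma mask_add m c (A B : 'M[R]_(m, n)) :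
  in_blockset c A -> in_blockset c B -> in_blockset c (A + B).
Proof. by move=> hA hB j cj; rewrite submxrowD hA // hB // addr0. Qed.

Lemma mask_scale m c (a : R) (A : 'M[R]_(m, n)) :
  in_blockset c A -> in_blockset c (a *: A).
Proof. by move=> hA j cj; rewrite submxrowZ hA // scaler0. Qed.

Lemma mask_in m c (A : 'M[R]_(m, n)) : in_blockset c (maskblocks c A).
Proof. by move=> j cj; rewrite mask_sub cj. Qed.

Lemma in_block0 m c : in_blockset c (0 : 'M[R]_(m, n)).
Proof. by move=> j _; rewrite submxrow0. Qed.

End Mask.

Section Sums.
Variable R : realType.

Lemma upd_sum (T : finType) (V : zmodType) (F D : T -> V) (I : {set T}) (k : T) :
  k \notin I ->
  \sum_i (if i \in I then F i + D i else if i == k then 0 else F i)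
  = \sum_i F i + \sum_(i in I) D i - F k.
Proof.
move=> kI.
rewrite (eq_bigr (fun i => F i + (if i \in I then D i else 0)
                          - (if i == k then F k else 0))); last first.
  move=> i _; case: ifP => iI.
    have -> : (i == k) = false by apply/eqP => ik; rewrite -ik iI in kI.
    by rewrite subr0.
  by rewrite addr0; case: eqP => [->|_]; rewrite ?subrr ?subr0.
by rewrite !big_split /= sumrN -!big_mkcond big_pred1_eq.
Qed.

Lemma add_sum (T : finType) (V : zmodType) (F D : T -> V) (I : {set T}) :
  \sum_i (if i \in I then F i + D i else F i) = \sum_i F i + \sum_(i in I) D i.
Proof.
rewrite (eq_bigr (fun i => F i + (if i \in I then D i else 0))); last first.
  by move=> i _; case: ifP => _; rewrite ?addr0.
by rewrite big_split /= -big_mkcond.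
Qed.

Lemma drop_sum (T : finType) (V : zmodType) (F : T -> V) (k : T) :
  \sum_i (if i == k then 0 else F i) = \sum_i F i - F k.
Proof.
rewrite [in RHS](bigD1 k) //= addrC addrK (bigD1 k) //= eqxx add0r.
by apply: eq_bigr => i /negbTE ->.
Qed.

Lemma sum_redist (T : finType) (lam a a' : T -> R) (I : {set T}) (y : R) :
  (forall i, 0 <= lam i) -> (forall i, i \in I -> a' i <= a i + y) ->
  (forall i, i \notin I -> a' i <= a i) ->
  \sum_i lam i * a' i <= \sum_i lam i * a i + (\sum_(i in I) lam i) * y.
Proof.
move=> l0 hI hN; rewrite mulr_suml [\sum_(i in I) _]big_mkcond /= -big_split; apply: ler_sum => i _.
case: ifP => iI /=; first by rewrite -mulrDr ler_wpM2l // hI.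
by rewrite addr0 ler_wpM2l // hN // iI.
Qed.

Lemma sum_drop_lam (T : finType) (lam f : T -> R) (k : T) :
  \sum_i lam i * (if i == k then 0 else f i) = \sum_i lam i * f i - lam k * f k.
Proof.
rewrite -(drop_sum (fun i => lam i * f i)); apply: eq_bigr => i _.
by case: ifP; rewrite ?mulr0.
Qed.

Lemma nucDZ m n (t : R) (A M : 'M[R]_(m, n)) :
  0 <= t -> nucnorm (A + t *: M) <= nucnorm A + t * nucnorm M.
Proof. by move=> t0; apply: le_trans (nucD _ _) _; rewrite lerD2l nucZ. Qed.

End Sums.

Lemma removable_of (R : realType) J (nj : 'I_J -> nat) K L p q X Y
    (CY : 'I_J -> 'I_K -> bool) (CS : 'I_J -> 'I_L -> bool)
    (lamB : 'I_K -> R) lamS zero :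
  (forall B S, feasible CS S -> exists B' S',
     [/\ feasible CS S', @fobj R J nj K L p q X Y CY lamB lamS B' S'
        <= fobj X Y CY lamB lamS B S & zero B' S']) ->
  module_removable X Y CY CS lamB lamS zero.
Proof.
move=> h B S [fS minS]; have [B' [S' [fS' le z]]] := h B S fS.
exists B', S'; split => //; split => // B'' S'' f''.
exact: le_trans le (minS _ _ f'').
Qed.

Lemma fobj_le (R : realType) J (nj : 'I_J -> nat) K L p q X Y
    (CY : 'I_J -> 'I_K -> bool) (lamB : 'I_K -> R) (lamS : 'I_L -> R)
    (B B' : 'I_K -> 'M[R]_(p, q)) (S S' : 'I_L -> 'M[R]_(p, \sum_j nj j)) :
  \sum_k (B' k *m Yk Y CY k) + \sum_l S' l = \sum_k (B k *m Yk Y CY k) + \sum_l S l ->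
  \sum_k lamB k * nucnorm (B' k) + \sum_l lamS l * nucnorm (S' l)
   <= \sum_k lamB k * nucnorm (B k) + \sum_l lamS l * nucnorm (S l) ->
  @fobj R J nj K L p q X Y CY lamB lamS B' S' <= fobj X Y CY lamB lamS B S.
Proof.
move=> e h; rewrite /fobj.
have E (a b : 'M[R]_(p, \sum_j nj j)) : X - a - b = X - (a + b) by rewrite opprD addrA.
by rewrite !E e -!addrA lerD2l.
Qed.

Theorem proposition1 (R : realType) (J K L p q : nat) (nj : 'I_J -> nat)
  (X : 'M[R]_(p, \sum_(j < J) nj j)) (Y : 'M[R]_(q, \sum_(j < J) nj j))
  (CY : 'I_J -> 'I_K -> bool) (CS : 'I_J -> 'I_L -> bool)
  (lamB : 'I_K -> R) (lamS : 'I_L -> R) :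
  (0 < J)%N -> (0 < p)%N -> (0 < q)%N -> (forall j, 0 < nj j)%N ->
  (forall k, 0 < lamB k) -> (forall l, 0 < lamS l) ->
  (* 1. failure of condition 1 for B_k *)
  (forall (k : 'I_K),
     (exists (I : {set 'I_K}) (c : nat),
        [/\ k \notin I, (0 < c)%N,
            (forall j, \sum_(i in I) (CY j i : nat) = c * CY j k)%N
          & (c%:R)^-1 * \sum_(i in I) lamB i <= lamB k]) ->
     module_removable X Y CY CS lamB lamS (fun B _ => B k = 0))
  /\
  (* 2. failure of condition 2 for B_k *)
  (forall (k : 'I_K),
     (exists (I : {set 'I_L}) (c : nat),
        [/\ (0 < c)%N,
            (forall j, \sum_(i in I) (CS j i : nat) = c * CY j k)%N
          & (c%:R)^-1 * \sum_(i in I) (lamS i * nucnorm (Yk Y CY k)) <= lamB k]) ->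
     module_removable X Y CY CS lamB lamS (fun B _ => B k = 0))
  /\
  (* 3. failure of condition 3 for S^(l') *)
  (forall (l l' : 'I_L),
     l != l' -> (forall j, (CS j l' : nat) <= CS j l)%N ->
     lamS l <= lamS l' ->
     module_removable X Y CY CS lamB lamS (fun _ S => S l' = 0))
  /\
  (* 4. failure of condition 4 for S^(l) *)
  (forall (l : 'I_L),
     (exists (I : {set 'I_L}) (c : nat),
        [/\ l \notin I, (0 < c)%N,
            (forall j, \sum_(i in I) (CS j i : nat) = c * CS j l)%N
          & (c%:R)^-1 * \sum_(i in I) lamS i <= lamS l]) ->
     module_removable X Y CY CS lamB lamS (fun _ S => S l = 0)).


Proof.
move=> J0 p0 q0 nj0 lB0 lS0.
have lB0' k : 0 <= lamB k by apply: ltW.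
have lS0' l : 0 <= lamS l by apply: ltW.
split; [|split; [|split]].
-
  move=> k [I [c [kI c0 hsum hlam]]].
  apply: removable_of => B S fS.
  have cR : (c%:R : R) != 0 by rewrite pnatr_eq0 -lt0n.
  pose B' i := if i \in I then B i + (c%:R)^-1 *: B k
               else if i == k then 0 else B i.
  exists B', S; split => //; last by rewrite /B' (negbTE kI) eqxx.
  apply: fobj_le.
    congr (_ + _).
    rewrite (eq_bigr (fun i => if i \in I then B i *m Yk Y CY i
                 + ((c%:R)^-1 *: B k) *m Yk Y CY i
               else if i == k then 0 else B i *m Yk Y CY i)); last first.
      move=> i _; rewrite /B'; case: ifP => _; first by rewrite mulmxDl.
      by case: ifP => _; rewrite ?mul0mx.
    rewrite upd_sum // -mulmx_sumr.
    have -> : \sum_(i in I) Yk Y CY i = c%:R *: Yk Y CY k.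
      by rewrite /Yk; apply: mask_sum.
    by rewrite -scalemxAl -scalemxAr scalerA mulVf // scale1r addrK.
  rewrite lerD2r.
  have h := @sum_redist R _ lamB (fun i => if i == k then 0 else nucnorm (B i))
    (fun i => nucnorm (B' i)) I ((c%:R)^-1 * nucnorm (B k)) lB0'.
  apply: le_trans (h _ _) _.
  + move=> i iI; have ik : (i == k) = false.
      by apply/eqP => e; rewrite -e iI in kI.
    rewrite /B' iI ik; apply: nucDZ.
    by rewrite invr_ge0 ler0n.
  + move=> i iI; rewrite /B' (negbTE iI).
    by case: ifP => _; rewrite ?nuc0.
  rewrite sum_drop_lam.
  have hb : (\sum_(i in I) lamB i) * ((c%:R)^-1 * nucnorm (B k))
      <= lamB k * nucnorm (B k).
    by rewrite mulrA [_ * c%:R^-1]mulrC ler_wpM2r // nuc_ge0.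
  lra.
-
  move=> k [I [c [c0 hsum hlam]]].
  apply: removable_of => B S fS.
  have cR : (c%:R : R) != 0 by rewrite pnatr_eq0 -lt0n.
  have ci0 : 0 <= (c%:R : R)^-1 by rewrite invr_ge0 ler0n.
  pose M := B k *m Yk Y CY k.
  pose B' i := if i == k then 0 else B i.
  pose S' l := if l \in I then S l + (c%:R)^-1 *: maskblocks (fun j => CS j l) M
               else S l.
  exists B', S'; split; last by rewrite /B' eqxx.
    move=> l; rewrite /S'; case: ifP => _; last exact: fS.
    by apply: mask_add; [exact: fS | apply: mask_scale; exact: mask_in].
  apply: fobj_le.
    rewrite (eq_bigr (fun i => if i == k then 0 else B i *m Yk Y CY i)); last first.
      by move=> i _; rewrite /B'; case: ifP => _; rewrite ?mul0mx.
    rewrite drop_sum add_sum -scaler_sumr.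
    rewrite (mask_sum (ck := fun j => CY j k) (c := c)) //.
    rewrite mask_id; last first.
      move=> j cj; rewrite /M -mul_submxrow /Yk mask_sub cj mulmx0 //.
    rewrite scalerA mulVf // scale1r -/M.
    by rewrite addrA addrAC subrK.
  have hB : \sum_i lamB i * nucnorm (B' i)
      = \sum_i lamB i * nucnorm (B i) - lamB k * nucnorm (B k).
    rewrite -sum_drop_lam; apply: eq_bigr => i _; rewrite /B'.
    by case: ifP => _; rewrite ?nuc0.
  have h := @sum_redist R _ lamS (fun l => nucnorm (S l))
    (fun l => nucnorm (S' l)) I ((c%:R)^-1 * (nucnorm (B k) * nucnorm (Yk Y CY k))) lS0'.
  have hS : \sum_l lamS l * nucnorm (S' l) <= \sum_l lamS l * nucnorm (S l) +
      (\sum_(l in I) lamS l) * ((c%:R)^-1 * (nucnorm (B k) * nucnorm (Yk Y CY k))).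
    apply: h.
      move=> l lI; rewrite /S' lI; apply: le_trans (nucDZ _ _ ci0) _.
      rewrite lerD2l ler_wpM2l // /M maskM.
      apply: le_trans (nucM _ _) _; rewrite ler_wpM2l ?nuc_ge0 //.
      exact: nuc_mask.
    by move=> l lI; rewrite /S' (negbTE lI).
  have hb : (\sum_(l in I) lamS l) * ((c%:R)^-1 * (nucnorm (B k) * nucnorm (Yk Y CY k)))
      <= lamB k * nucnorm (B k).
    have -> : (\sum_(l in I) lamS l) * ((c%:R)^-1 * (nucnorm (B k) * nucnorm (Yk Y CY k)))
       = ((c%:R)^-1 * \sum_(l in I) (lamS l * nucnorm (Yk Y CY k))) * nucnorm (B k).
      by rewrite -mulr_suml; ring.
    by rewrite ler_wpM2r // nuc_ge0.
  rewrite hB; lra.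
-
  move=> l l' ll' hle hlam.
  apply: removable_of => B S fS.
  have l'l : l' \notin [set l] by rewrite inE eq_sym.
  pose S' i := if i \in [set l] then S i + S l' else if i == l' then 0 else S i.
  exists B, S'; split; last by rewrite /S' (negbTE l'l) eqxx.
    move=> i; rewrite /S'; case: ifP => [|_]; last first.
      by case: ifP => [_|_]; [exact: in_block0 | exact: fS].
    rewrite inE => /eqP ->; apply: mask_add; first exact: fS.
    move=> j cj; apply: (fS l'); move: (hle j); rewrite cj.
    by case: (CS j l').
  apply: fobj_le.
    by rewrite upd_sum // big_set1 addrK.
  rewrite lerD2l.
  have h := @sum_redist R _ lamS (fun i => if i == l' then 0 else nucnorm (S i))
    (fun i => nucnorm (S' i)) [set l] (nucnorm (S l')) lS0'.
  apply: le_trans (h _ _) _.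
  + move=> i; rewrite inE => /eqP ->; rewrite /S' inE eqxx (negbTE ll').
    exact: nucD.
  + move=> i iI; rewrite /S' (negbTE iI).
    by case: ifP => _; rewrite ?nuc0.
  rewrite sum_drop_lam big_set1.
  have : lamS l * nucnorm (S l') <= lamS l' * nucnorm (S l').
    by rewrite ler_wpM2r // nuc_ge0.
  lra.
-
  move=> l [I [c [lI c0 hsum hlam]]].
  apply: removable_of => B S fS.
  have cR : (c%:R : R) != 0 by rewrite pnatr_eq0 -lt0n.
  have ci0 : 0 <= (c%:R : R)^-1 by rewrite invr_ge0 ler0n.
  pose S' i := if i \in I then S i + (c%:R)^-1 *: maskblocks (fun j => CS j i) (S l)
               else if i == l then 0 else S i.
  exists B, S'; split; last by rewrite /S' (negbTE lI) eqxx.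
    move=> i; rewrite /S'; case: ifP => _; last first.
      by case: ifP => [_|_]; [exact: in_block0 | exact: fS].
    by apply: mask_add; [exact: fS | apply: mask_scale; exact: mask_in].
  apply: fobj_le.
    rewrite upd_sum // -scaler_sumr.
    rewrite (mask_sum (ck := fun j => CS j l) (c := c)) //.
    rewrite mask_id; last exact: fS.
    by rewrite scalerA mulVf // scale1r addrK.
  rewrite lerD2l.
  have h := @sum_redist R _ lamS (fun i => if i == l then 0 else nucnorm (S i))
    (fun i => nucnorm (S' i)) I ((c%:R)^-1 * nucnorm (S l)) lS0'.
  apply: le_trans (h _ _) _.
  + move=> i iI; have il : (i == l) = false.
      by apply/eqP => e; rewrite -e iI in lI.
    rewrite /S' iI il; apply: le_trans (nucDZ _ _ ci0) _.
    by rewrite lerD2l ler_wpM2l // nuc_mask.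
  + move=> i iI; rewrite /S' (negbTE iI).
    by case: ifP => _; rewrite ?nuc0.
  rewrite sum_drop_lam.
  have hb : (\sum_(i in I) lamS i) * ((c%:R)^-1 * nucnorm (S l))
      <= lamS l * nucnorm (S l).
    by rewrite mulrA [_ * c%:R^-1]mulrC ler_wpM2r // nuc_ge0.
  lra.
Qed.
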